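(* Let $\epsilon\in[0,1]$ and let $\boldsymbol{g}_t,\boldsymbol{\mu}_t,\Delta_t\in\mathbb{R}^d$ satisfy $\boldsymbol{g}_t^\top\Delta_t>0$, $\boldsymbol{\mu}_t\perp\boldsymbol{g}_t$ and $\boldsymbol{\mu}_t\perp\Delta_t$. Then (whenever the denominators are nonzero) $$\frac{(1-\epsilon)\|\boldsymbol{g}_t\|^2+\boldsymbol{g}_t^\top\Delta_t}{\|(1-\epsilon)\boldsymbol{g}_t+\epsilon\boldsymbol{\mu}_t+\Delta_t\|}+\frac{(1-\epsilon)\|\boldsymbol{g}_t\|^2-\boldsymbol{g}_t^\top\Delta_t}{\|(1-\epsilon)\boldsymbol{g}_t+\epsilon\boldsymbol{\mu}_t-\Delta_t\|}\ge0.$$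
   Context: The condition $\boldsymbol{g}_t^\top\Delta_t>0$ means $\Delta_t$ lies in the open half-space $H_+=\{v:\boldsymbol{g}_t^\top v>0\}$. *)

(* Defs.v *)
From HB Require Import structures.
From mathcomp Require Import all_boot all_order all_algebra.
Set Implicit Arguments. Unset Strict Implicit. Unset Printing Implicit Defensive.
Import Order.TTheory GRing.Theory Num.Theory.
Local Open Scope ring_scope.

Definition dotv (R : rcfType) (d : nat) (u v : 'rV[R]_d) : R :=
  \sum_(i < d) u 0 i * v 0 i.

Definition enorm (R : rcfType) (d : nat) (v : 'rV[R]_d) : R :=
  Num.sqrt (dotv v v).

(* Main.v *)
Require Import Defs.
From HB Require Import structures.
From mathcomp Require Import all_boot all_order all_algebra.
From mathcomp Require Import ring lra.
Import Order.TTheory GRing.Theory Num.Theory.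
Local Open Scope ring_scope.

Section Dot.
Variables (R : rcfType) (d : nat).
Implicit Types (u v w : 'rV[R]_d) (a : R).

Lemma dotvC u v : dotv u v = dotv v u.
Proof. by apply: eq_bigr => i _; rewrite mulrC. Qed.

Lemma dotvDl u v w : dotv (u + v) w = dotv u w + dotv v w.
Proof. by rewrite /dotv -big_split; apply: eq_bigr => i _; rewrite mxE mulrDl. Qed.

Lemma dotvBl u v w : dotv (u - v) w = dotv u w - dotv v w.
Proof.
rewrite /dotv -sumrB; apply: eq_bigr => i _; rewrite !mxE mulrBl //.
Qed.

Lemma dotvZl a u w : dotv (a *: u) w = a * dotv u w.
Proof. by rewrite /dotv mulr_sumr; apply: eq_bigr => i _; rewrite mxE mulrA. Qed.

Lemma dotvDr u v w : dotv w (u + v) = dotv w u + dotv w v.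
Proof. by rewrite dotvC dotvDl !(dotvC w). Qed.

Lemma dotvBr u v w : dotv w (u - v) = dotv w u - dotv w v.
Proof. by rewrite dotvC dotvBl !(dotvC w). Qed.

Lemma dotvZr a u w : dotv w (a *: u) = a * dotv w u.
Proof. by rewrite dotvC dotvZl dotvC. Qed.

Lemma dotv_ge0 u : 0 <= dotv u u.
Proof. by apply: sumr_ge0 => i _; rewrite -expr2 sqr_ge0. Qed.

Lemma dotv_eq0 u : dotv u u = 0 -> forall w, dotv u w = 0.
Proof.
move=> /eqP; rewrite psumr_eq0; last by move=> i _; rewrite -expr2 sqr_ge0.
move=> /allP H w; apply: big1 => i _.
have := H i (mem_index_enum i); rewrite -expr2 sqrf_eq0 => /eqP ->.
by rewrite mul0r.
Qed.

Lemma enorm_sq u : enorm u ^+ 2 = dotv u u.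
Proof. by rewrite /enorm sqr_sqrtr // dotv_ge0. Qed.

Lemma cs u v : dotv u v ^+ 2 <= dotv u u * dotv v v.
Proof.
have [/dotv_eq0 H|] := eqVneq (dotv u u) 0.
  by rewrite (H v) expr0n /= mulr_ge0 // dotv_ge0.
move=> nz.
have pos : 0 < dotv u u by rewrite lt_def nz dotv_ge0.
set t := dotv u v / dotv u u.
have := dotv_ge0 (t *: u - v).
rewrite !(dotvBl, dotvBr, dotvZl, dotvZr) (dotvC v u).
rewrite /t => H.
have E : dotv u v / dotv u u * (dotv u v / dotv u u * dotv u u - dotv u v) = 0.
  by rewrite mulfVK // subrr mulr0.
rewrite E sub0r in H.
rewrite -subr_ge0.
have : 0 <= dotv u u * - (dotv u v / dotv u u * dotv u v - dotv v v).
  by apply: mulr_ge0 => //; exact: ltW.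
have -> : dotv u u * - (dotv u v / dotv u u * dotv u v - dotv v v)
   = dotv u u * dotv v v - dotv u v ^+ 2.
  by field.
done.
Qed.
End Dot.

Theorem lemma2 (R : rcfType) (d : nat) (eps : R) (g mu D : 'rV[R]_d) :
  0 <= eps -> eps <= 1 ->
  0 < dotv g D ->
  dotv mu g = 0 -> dotv mu D = 0 ->
  enorm ((1 - eps) *: g + eps *: mu + D) != 0 ->
  enorm ((1 - eps) *: g + eps *: mu - D) != 0 ->
  0 <= ((1 - eps) * enorm g ^+ 2 + dotv g D) / enorm ((1 - eps) *: g + eps *: mu + D)
     + ((1 - eps) * enorm g ^+ 2 - dotv g D) / enorm ((1 - eps) *: g + eps *: mu - D).
Proof.
move=> e0 e1 cpos mug muD pnz qnz.
have [a aE] : {a : R | 1 - eps = a} by exists (1 - eps).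
have a0 : 0 <= a by rewrite -aE subr_ge0.
rewrite aE in pnz qnz; rewrite aE.
set v := a *: g + eps *: mu.
set p := enorm (v + D). set q := enorm (v - D).
have pp : 0 < p.
  rewrite lt_def sqrtr_ge0 andbT; exact: pnz.
have qp : 0 < q by rewrite lt_def sqrtr_ge0 andbT; exact: qnz.
set n := dotv g g. set c := dotv g D. set m := dotv D D.
set s := dotv mu mu.
have vD : dotv v D = a * c.
  by rewrite /v dotvDl !dotvZl muD mulr0 addr0.
have vv : dotv v v = a ^+ 2 * n + eps ^+ 2 * s.
  rewrite /v !(dotvDl, dotvDr, dotvZl, dotvZr) mug (@dotvC _ _ g mu) mug.
  rewrite -/n -/s. ring.
clearbody v.
have p2 : p ^+ 2 = dotv v v + m + 2 * (a * c).
  rewrite /p enorm_sq !(dotvDl, dotvDr) vD (@dotvC _ _ D v) vD -/m ; ring.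
have q2 : q ^+ 2 = dotv v v + m - 2 * (a * c).
  rewrite /q enorm_sq !(dotvBl, dotvBr) vD (@dotvC _ _ D v) vD -/m ; ring.
have c0 : 0 < c by exact: cpos.
have csi : c ^+ 2 <= n * m by apply: cs.
have s0 : 0 <= s by apply: dotv_ge0.
have n0 : 0 <= n by apply: dotv_ge0.
rewrite enorm_sq -/n.
have an0 : 0 <= a * n by apply: mulr_ge0.
have key : 0 <= (a * n + c) * q + (a * n - c) * p.
  have [B0|B0] := leP 0 (a * n - c).
    by apply: addr_ge0; apply: mulr_ge0; (lra || exact: ltW).
  suff : ((c - a * n) * p) ^+ 2 <= ((a * n + c) * q) ^+ 2.
    rewrite -ler_sqrt ?sqr_ge0 // !sqrtr_sqr !ger0_norm; first lra.
    - by apply: mulr_ge0; (lra || exact: ltW).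
    - by apply: mulr_ge0; (lra || exact: ltW).
  rewrite !exprMn p2 q2 vv -subr_ge0.
  have h1 : 0 <= a * c by apply: mulr_ge0 => //; exact: ltW.
  have h2 : 0 <= n * (eps ^+ 2 * s) by apply: mulr_ge0 => //; apply: mulr_ge0 => //; exact: sqr_ge0.
  have h3 : 0 <= n * m - c ^+ 2 by rewrite subr_ge0.
  have -> : (a * n + c) ^+ 2 * (a ^+ 2 * n + eps ^+ 2 * s + m - 2 * (a * c)) -
      (c - a * n) ^+ 2 * (a ^+ 2 * n + eps ^+ 2 * s + m + 2 * (a * c))
      = 4 * (a * c) * (n * (eps ^+ 2 * s) + (n * m - c ^+ 2)) by ring.
  by apply: mulr_ge0; [apply: mulr_ge0 => // | apply: addr_ge0].
have -> : (a * n + c) / p + (a * n - c) / q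
    = ((a * n + c) * q + (a * n - c) * p) / (p * q).
  field; apply/andP; split; by rewrite gt_eqF.
by apply: divr_ge0 => //; apply: mulr_ge0; exact: ltW.
Qed.
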